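(* Let $(D,\rho)$, $(L_1,\sigma_1)$, $(L_2,\sigma_2)$ be metric spaces and let $(\mathcal M,\|\cdot\|)$ be a normed linear space. Let $\varphi_1: D\times L_1\to\mathcal M$ and $\varphi_2: D\times L_2\to\mathcal M$ be maps such that: (a) there are $C_0>0$ and $\alpha>0$ such that for $i=1,2$, all $\xi\in D$ and all $x,y\in L_i$, $\|\varphi_i(\xi,x)-\varphi_i(\xi,y)\|\le C_0[\sigma_i(x,y)]^{\alpha}$; (b) there are $M_0>0$ and $\beta>0$ such that the function $\Phi(\xi,x_1,x_2):=\varphi_1(\xi,x_1)-\varphi_2(\xi,x_2)$ on $D\times L_1\times L_2$ satisfies $\|\Phi(\xi',x_1,x_2)-\Phi(\xi,x_1,x_2)\|\ge M_0[\rho(\xi',\xi)]^{\beta}$ for all $(x_1,x_2)\in L_1\times L_2$ and all $\xi,\xi'\in D$. Then the set $\Delta:=\{\xi\in D:\ \varphi_1(\xi,L_1)\cap\varphi_2(\xi,L_2)\ne\varnothing\}$ satisfies $$\dim_H\Delta\le\min\{(\beta/\alpha)\dim_H(L_1\times L_2),\ \dim_H D\}.$$ Moreover, if $\varphi_1,\varphi_2$ are continuous and $L_1,L_2$ are compact, then $\Delta$ is closed in $D$.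
   Context: Cartesian products of metric spaces carry the canonical product metric, e.g. on $L_1\times L_2$: $\tilde\sigma((x_1,x_2),(y_1,y_2))=\sqrt{\sigma_1(x_1,y_1)^2+\sigma_2(x_2,y_2)^2}$, and similarly on $D\times L_i$ and $D\times L_1\times L_2$. $\dim_H$ denotes Hausdorff dimension of a metric space. *)

(* Defs.v *)
From Stdlib Require Import Reals Lra List.
Open Scope R_scope.

Definition is_metric {X : Type} (d : X -> X -> R) : Prop :=
  (forall x y, 0 <= d x y) /\
  (forall x y, d x y = 0 <-> x = y) /\
  (forall x y, d x y = d y x) /\
  (forall x y z, d x z <= d x y + d y z).

Definition prod_dist {X Y : Type} (d1 : X -> X -> R) (d2 : Y -> Y -> R)
  : (X * Y) -> (X * Y) -> R :=
  fun p q => sqrt (Rsqr (d1 (fst p) (fst q)) + Rsqr (d2 (snd p) (snd q))).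

Definition full {X : Type} : X -> Prop := fun _ => True.

Record NormedSpace := {
  ns_car :> Type;
  ns_zero : ns_car;
  ns_add : ns_car -> ns_car -> ns_car;
  ns_opp : ns_car -> ns_car;
  ns_scal : R -> ns_car -> ns_car;
  ns_norm : ns_car -> R;
  ns_addA : forall x y z, ns_add x (ns_add y z) = ns_add (ns_add x y) z;
  ns_addC : forall x y, ns_add x y = ns_add y x;
  ns_add0 : forall x, ns_add x ns_zero = x;
  ns_addN : forall x, ns_add x (ns_opp x) = ns_zero;
  ns_scalA : forall a b x, ns_scal a (ns_scal b x) = ns_scal (a * b) x;
  ns_scal1 : forall x, ns_scal 1 x = x;
  ns_scalDr : forall a x y, ns_scal a (ns_add x y) = ns_add (ns_scal a x) (ns_scal a y);
  ns_scalDl : forall a b x, ns_scal (a + b) x = ns_add (ns_scal a x) (ns_scal b x);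
  ns_norm_ge0 : forall x, 0 <= ns_norm x;
  ns_norm_eq0 : forall x, ns_norm x = 0 -> x = ns_zero;
  ns_normZ : forall a x, ns_norm (ns_scal a x) = Rabs a * ns_norm x;
  ns_normD : forall x y, ns_norm (ns_add x y) <= ns_norm x + ns_norm y
}.

Definition ns_sub (M : NormedSpace) (x y : M) : M := ns_add M x (ns_opp M y).

(* real power with the convention 0^a = 0 (used only for a > 0) *)
Definition rpow (x a : R) : R := if Rle_dec x 0 then 0 else Rpower x a.

Inductive ereal := EFin (r : R) | EPInf.

Definition ele (a b : ereal) : Prop :=
  match a, b with
  | _, EPInf => True
  | EPInf, EFin _ => False
  | EFin x, EFin y => x <= y
  end.

Definition emin (a b : ereal) : ereal :=
  match a, b with
  | EPInf, _ => b
  | _, EPInf => a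
  | EFin x, EFin y => EFin (Rmin x y)
  end.

Definition escale (c : R) (a : ereal) : ereal :=
  match a with EFin x => EFin (c * x) | EPInf => EPInf end.

(* d is the diameter of E (diameter of the empty set is 0) *)
Definition is_diam {X : Type} (dist : X -> X -> R) (E : X -> Prop) (d : R) : Prop :=
  ((forall x, ~ E x) /\ d = 0) \/
  ((exists x, E x) /\ is_lub (fun t => exists x y, E x /\ E y /\ t = dist x y) d).

(* H^s(A) = 0, i.e. for every delta > 0, H^s_delta(A) = 0: for every eps > 0
   there is a countable delta-cover (U_n) of A with sum_n (diam U_n)^s <= eps. *)
Definition hnull {X : Type} (dist : X -> X -> R) (s : R) (A : X -> Prop) : Prop :=
  forall delta eps, 0 < delta -> 0 < eps ->
  exists (U : nat -> X -> Prop) (dm : nat -> R),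
    (forall n, is_diam dist (U n) (dm n) /\ dm n <= delta) /\
    (forall x, A x -> exists n, U n x) /\
    (forall N, sum_f_R0 (fun n => rpow (dm n) s) N <= eps).

(* v is the Hausdorff dimension of A: v = inf { s > 0 | H^s(A) = 0 } in [0,+oo] *)
Definition is_hdim {X : Type} (dist : X -> X -> R) (A : X -> Prop) (v : ereal) : Prop :=
  match v with
  | EPInf => forall s, 0 < s -> ~ hnull dist s A
  | EFin r =>
      (exists s, 0 < s /\ hnull dist s A) /\
      (forall s, 0 < s -> hnull dist s A -> r <= s) /\
      (forall r', (forall s, 0 < s -> hnull dist s A -> r' <= s) -> r' <= r)
  end.

Definition is_open {X : Type} (dist : X -> X -> R) (U : X -> Prop) : Prop :=
  forall x, U x -> exists r, 0 < r /\ forall y, dist x y < r -> U y.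

Definition compact_space {X : Type} (dist : X -> X -> R) : Prop :=
  forall (I : Type) (U : I -> X -> Prop),
    (forall i, is_open dist (U i)) -> (forall x, exists i, U i x) ->
    exists l : list I, forall x, exists i, In i l /\ U i x.

Definition closed_in {X : Type} (dist : X -> X -> R) (A : X -> Prop) : Prop :=
  forall x, (forall eps, 0 < eps -> exists y, A y /\ dist x y < eps) -> A x.

Definition continuous_into {X : Type} (dist : X -> X -> R) (M : NormedSpace)
  (f : X -> M) : Prop :=
  forall p eps, 0 < eps -> exists del, 0 < del /\
    forall q, dist p q < del -> ns_norm M (ns_sub M (f p) (f q)) < eps.

Definition DeltaSet {D L1 L2 : Type} (M : NormedSpace)
  (phi1 : D -> L1 -> M) (phi2 : D -> L2 -> M) : D -> Prop :=
  fun xi => exists x1 x2, phi1 xi x1 = phi2 xi x2.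

(* Main.v *)
Require Import Defs.
From Stdlib Require Import Reals Lra Lia List Classical.
Open Scope R_scope.

Section Alg.
Variable M : NormedSpace.
Notation "0v" := (ns_zero M).
Notation add := (ns_add M).
Notation opp := (ns_opp M).
Notation sc := (ns_scal M).
Notation nm := (ns_norm M).
Notation sub := (ns_sub M).

Lemma add0l x : add 0v x = x.
Proof. rewrite ns_addC. apply ns_add0. Qed.
Lemma addNl x : add (opp x) x = 0v.
Proof. rewrite ns_addC. apply ns_addN. Qed.
Lemma sub_self x : sub x x = 0v.
Proof. apply ns_addN. Qed.
Lemma sub_eq0 x y : sub x y = 0v -> x = y.
Proof.
  unfold ns_sub; intro H.
  rewrite <- (ns_add0 M x), <- (addNl y), ns_addA, H. apply add0l.
Qed.
Lemma opp0 : opp 0v = 0v.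
Proof. rewrite <- (add0l (opp 0v)). apply ns_addN. Qed.
Lemma sub_0r x : sub x 0v = x.
Proof. unfold ns_sub. rewrite opp0. apply ns_add0. Qed.
Lemma sub_split x y z : add (sub x y) (sub y z) = sub x z.
Proof.
  unfold ns_sub. rewrite <- (ns_addA M x), (ns_addA M (opp y) y), addNl, add0l. reflexivity.
Qed.
Lemma norm_sub_tri x y z : nm (sub x z) <= nm (sub x y) + nm (sub y z).
Proof. rewrite <- (sub_split x y z). apply ns_normD. Qed.
Lemma opp_uniq w v : add w v = 0v -> w = opp v.
Proof.
  intro H. rewrite <- (ns_add0 M w), <- (ns_addN M v), ns_addA, H. apply add0l.
Qed.
Lemma scal0 v : sc 0 v = 0v.
Proof.
  assert (H : sc 0 v = add (sc 0 v) (sc 0 v)).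
  { rewrite <- ns_scalDl. f_equal. ring. }
  assert (H2 : add (sc 0 v) (opp (sc 0 v)) = add (add (sc 0 v) (sc 0 v)) (opp (sc 0 v))).
  { rewrite <- H. reflexivity. }
  rewrite <- ns_addA, !ns_addN, ns_add0 in H2. symmetry. exact H2.
Qed.
Lemma opp_scal v : opp v = sc (-1) v.
Proof.
  symmetry. apply opp_uniq. rewrite <- (ns_scal1 M v) at 2.
  rewrite <- ns_scalDl. replace (-1 + 1) with 0 by ring. apply scal0.
Qed.
Lemma oppK v : opp (opp v) = v.
Proof. symmetry. apply opp_uniq. apply ns_addN. Qed.
Lemma norm_sub_sym x y : nm (sub x y) = nm (sub y x).
Proof.
  assert (E : sub y x = sc (-1) (sub x y)).
  { unfold ns_sub. rewrite ns_scalDr, <- !opp_scal, oppK. apply ns_addC. }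
  rewrite E, ns_normZ. replace (Rabs (-1)) with 1 by (rewrite Rabs_left; lra). ring.
Qed.
End Alg.

Lemma rpow_ge0 x p : 0 <= rpow x p.
Proof. unfold rpow. destruct (Rle_dec x 0). lra. left. apply exp_pos. Qed.
Lemma rpow_pos x p : 0 < x -> 0 < rpow x p.
Proof. intro. unfold rpow. destruct (Rle_dec x 0). lra. apply exp_pos. Qed.
Lemma rpow_0 p : rpow 0 p = 0.
Proof. unfold rpow. destruct (Rle_dec 0 0); lra. Qed.
Lemma rpow_E x p : 0 < x -> rpow x p = Rpower x p.
Proof. intro. unfold rpow. destruct (Rle_dec x 0). lra. reflexivity. Qed.
Lemma rpow_mono x y p : 0 <= x <= y -> 0 < p -> rpow x p <= rpow y p.
Proof.
  intros H Hp. destruct (Req_dec x 0) as [->|].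
  - rewrite rpow_0. apply rpow_ge0.
  - rewrite !rpow_E by lra. apply Rle_Rpower_l; lra.
Qed.
Lemma rpow_rpow x p q : 0 <= x -> rpow (rpow x p) q = rpow x (p * q).
Proof.
  intro H. destruct (Req_dec x 0) as [->|].
  - rewrite !rpow_0. reflexivity.
  - rewrite (rpow_E x p) by lra. rewrite rpow_E by (apply exp_pos).
    rewrite rpow_E by lra. apply Rpower_mult.
Qed.
Lemma rpow_1 x : 0 <= x -> rpow x 1 = x.
Proof.
  intro H. destruct (Req_dec x 0) as [->|]. apply rpow_0.
  rewrite rpow_E by lra. apply Rpower_1. lra.
Qed.
Lemma rpow_mult x y p : 0 <= x -> 0 <= y -> rpow (x * y) p = rpow x p * rpow y p.
Proof.
  intros. destruct (Req_dec x 0) as [->|]. rewrite Rmult_0_l, !rpow_0. ring.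
  destruct (Req_dec y 0) as [->|]. rewrite Rmult_0_r, !rpow_0. ring.
  rewrite !rpow_E by (try apply Rmult_lt_0_compat; lra).
  symmetry. apply Rpower_mult_distr; lra.
Qed.
Lemma rpow_inv_le x y p : 0 <= x -> 0 <= y -> 0 < p -> rpow x p <= rpow y p -> x <= y.
Proof.
  intros Hx Hy Hp H.
  rewrite <- (rpow_1 x), <- (rpow_1 y) by auto.
  replace 1 with (p * / p) by (field; lra).
  rewrite <- !rpow_rpow by auto. apply rpow_mono. split; auto. apply rpow_ge0.
  apply Rinv_0_lt_compat; auto.
Qed.

Definition en (n : nat) : R := / (INR n + 1).
Lemma en_pos n : 0 < en n.
Proof. unfold en. apply Rinv_0_lt_compat. pose proof (pos_INR n). lra. Qed.
Lemma en_anti n m : (n <= m)%nat -> en m <= en n.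
Proof.
  intro H. unfold en. apply Rinv_le_contravar. pose proof (pos_INR n). lra.
  apply le_INR in H. lra.
Qed.
Lemma en_small t : 0 < t -> exists n, en n < t.
Proof.
  intro Ht. destruct (archimed_cor1 t Ht) as [N [H1 H2]]. exists N.
  eapply Rle_lt_trans; [|exact H1]. unfold en. apply Rinv_le_contravar.
  apply lt_0_INR; lia. lra.
Qed.

Lemma in_le_max i l : In i l -> (i <= fold_right max 0%nat l)%nat.
Proof. induction l; simpl; [tauto|]. intros [->|H]; [lia|]. apply IHl in H. lia. Qed.

Lemma compact_mono {X} (d : X -> X -> R) (W : nat -> X -> Prop) :
  compact_space d -> (forall n, is_open d (W n)) ->
  (forall x, exists n, W n x) ->
  exists N, forall x, exists k, (k <= N)%nat /\ W k x.
Proof.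
  intros Hc Ho Hcov. destruct (Hc nat W Ho Hcov) as [l Hl].
  exists (fold_right max 0%nat l). intro x. destruct (Hl x) as [i [Hi Hw]].
  exists i. split; auto. apply in_le_max; auto.
Qed.

Lemma lb_compact {X} (d : X -> X -> R) (Hd : is_metric d) (Q : X -> R -> Prop) :
  compact_space d -> (forall x c c', Q x c -> c' <= c -> Q x c') ->
  (forall x, exists c, 0 < c /\ Q x c) ->
  (forall x eps, 0 < eps -> exists r, 0 < r /\ forall c y, Q x c -> d x y < r -> Q y (c - eps)) ->
  exists c, 0 < c /\ forall x, Q x c.
Proof.
  intros Hc Hdown Hpos Hcont. destruct Hd as [Hd0 [Hd1 [Hds Hdt]]].
  set (W := fun n y => exists x r, 0 < r /\ d x y < r /\
          (forall c y', Q x c -> d x y' < r -> Q y' (c - en n)) /\ Q x (2 * en n)).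
  destruct (compact_mono d W Hc) as [N HN].
  - intros n y [x [r [Hr [Hxy [H1 H2]]]]]. exists (r - d x y). split. lra.
    intros y' Hy'. exists x, r. repeat split; auto. pose proof (Hdt x y y'). lra.
  - intro y. destruct (Hpos y) as [c [Hc0 Hq]].
    destruct (en_small (c/2)) as [n Hn]. lra. pose proof (en_pos n).
    destruct (Hcont y (en n) (en_pos n)) as [r [Hr Hrr]].
    exists n, y, r. repeat split; auto.
    + assert (d y y = 0) by (apply Hd1; auto). lra.
    + apply Hdown with c; auto. lra.
  - exists (en N). split. apply en_pos. intro y.
    destruct (HN y) as [k [Hk [x [r [Hr [Hxy [H1 H2]]]]]]].
    pose proof (en_anti k N Hk).
    apply Hdown with (2 * en k - en k). apply H1; auto. lra.
Qed.

Lemma pd_le {X Y} (d1 : X -> X -> R) (d2 : Y -> Y -> R) p q :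
  0 <= d1 (fst p) (fst q) -> 0 <= d2 (snd p) (snd q) ->
  prod_dist d1 d2 p q <= d1 (fst p) (fst q) + d2 (snd p) (snd q).
Proof.
  intros H1 H2. unfold prod_dist. rewrite <- (sqrt_Rsqr (d1 (fst p) (fst q) + d2 (snd p) (snd q))) by lra.
  apply sqrt_le_1_alt. unfold Rsqr. nra.
Qed.

Lemma pd_ge1 {X Y} (d1 : X -> X -> R) (d2 : Y -> Y -> R) p q :
  0 <= d1 (fst p) (fst q) -> d1 (fst p) (fst q) <= prod_dist d1 d2 p q.
Proof.
  intros H1. unfold prod_dist. rewrite <- (sqrt_Rsqr (d1 _ _)) at 1 by lra.
  apply sqrt_le_1_alt. pose proof (Rle_0_sqr (d2 (snd p) (snd q))). lra.
Qed.
Lemma pd_ge2 {X Y} (d1 : X -> X -> R) (d2 : Y -> Y -> R) p q :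
  0 <= d2 (snd p) (snd q) -> d2 (snd p) (snd q) <= prod_dist d1 d2 p q.
Proof.
  intros H1. unfold prod_dist. rewrite <- (sqrt_Rsqr (d2 _ _)) at 1 by lra.
  apply sqrt_le_1_alt. pose proof (Rle_0_sqr (d1 (fst p) (fst q))). lra.
Qed.

Lemma unif_cont {D L} (rho : D -> D -> R) (sigma : L -> L -> R)
  (HD : is_metric rho) (HL : is_metric sigma) (M : NormedSpace) (phi : D -> L -> M) :
  continuous_into (prod_dist rho sigma) M (fun p => phi (fst p) (snd p)) ->
  compact_space sigma ->
  forall xi eps, 0 < eps -> exists del, 0 < del /\
    forall xi' a, rho xi xi' < del -> ns_norm M (ns_sub M (phi xi a) (phi xi' a)) < eps.
Proof.
  intros Hcont Hc xi eps He.
  destruct HD as [Hr0 [Hr1 [Hrs Hrt]]]. destruct HL as [Hs0 [Hs1 [Hss Hst]]].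
  set (W := fun n a => exists a0, sigma a0 a < en n / 2 /\
     forall xi' a', prod_dist rho sigma (xi, a0) (xi', a') < en n ->
        ns_norm M (ns_sub M (phi xi a0) (phi xi' a')) < eps / 2).
  destruct (compact_mono sigma W Hc) as [N HN].
  - intros n a [a0 [H1 H2]]. exists (en n / 2 - sigma a0 a). split. lra.
    intros y Hy. exists a0. split; auto. pose proof (Hst a0 a y). lra.
  - intro a. destruct (Hcont (xi, a) (eps/2)) as [del [Hdel Hd]]. lra.
    destruct (en_small del Hdel) as [n Hn]. exists n, a. split.
    + assert (sigma a a = 0) by (apply Hs1; auto). pose proof (en_pos n). lra.
    + intros xi' a' Hp. apply (Hd (xi', a')). lra.
  - exists (en N / 2). split. pose proof (en_pos N). lra.
    intros xi' a Hx. destruct (HN a) as [k [Hk [a0 [H1 H2]]]].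
    pose proof (en_anti k N Hk). pose proof (en_pos k).
    eapply Rle_lt_trans. apply (norm_sub_tri M _ (phi xi a0)).
    rewrite norm_sub_sym.
    assert (A1 : ns_norm M (ns_sub M (phi xi a0) (phi xi a)) < eps/2).
    { apply H2. eapply Rle_lt_trans. apply pd_le; simpl; auto.
      assert (rho xi xi = 0) by (apply Hr1; auto). simpl. lra. }
    assert (A2 : ns_norm M (ns_sub M (phi xi a0) (phi xi' a)) < eps/2).
    { apply H2. eapply Rle_lt_trans. apply pd_le; simpl; auto. simpl. lra. }
    lra.
Qed.

Lemma cont_slice {D L} (rho : D -> D -> R) (sigma : L -> L -> R)
  (HD : is_metric rho) (HL : is_metric sigma) (M : NormedSpace) (phi : D -> L -> M) :
  continuous_into (prod_dist rho sigma) M (fun p => phi (fst p) (snd p)) ->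
  forall xi a eps, 0 < eps -> exists r, 0 < r /\
    forall a', sigma a a' < r -> ns_norm M (ns_sub M (phi xi a) (phi xi a')) < eps.
Proof.
  intros Hc xi a eps He. destruct (Hc (xi, a) eps He) as [r [Hr H]].
  exists r. split; auto. intros a' Ha. apply (H (xi, a')).
  destruct HD as [Hr0 [Hr1 _]]. destruct HL as [Hs0 _].
  eapply Rle_lt_trans. apply pd_le; simpl; auto.
  assert (rho xi xi = 0) by (apply Hr1; auto). simpl. lra.
Qed.

Lemma closed_part (D L1 L2 : Type) (rho : D -> D -> R) (sigma1 : L1 -> L1 -> R) (sigma2 : L2 -> L2 -> R)
  (HD : is_metric rho) (HL1 : is_metric sigma1) (HL2 : is_metric sigma2)
  (M : NormedSpace) (phi1 : D -> L1 -> M) (phi2 : D -> L2 -> M) :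
  continuous_into (prod_dist rho sigma1) M (fun p => phi1 (fst p) (snd p)) ->
  continuous_into (prod_dist rho sigma2) M (fun p => phi2 (fst p) (snd p)) ->
  compact_space sigma1 -> compact_space sigma2 ->
  closed_in rho (DeltaSet M phi1 phi2).
Proof.
  intros Hc1 Hc2 K1 K2 xi Happ. apply NNPP; intro Hn.
  assert (Hne : forall a b, phi1 xi a <> phi2 xi b).
  { intros a b E; apply Hn; exists a, b; auto. }
  assert (S1 : forall a, exists c, 0 < c /\ forall b,
             c <= ns_norm M (ns_sub M (phi1 xi a) (phi2 xi b))).
  { intro a.
    apply (lb_compact sigma2 HL2 (fun b c => c <= ns_norm M (ns_sub M (phi1 xi a) (phi2 xi b)))); auto.
    - intros; lra.
    - intro b. exists (ns_norm M (ns_sub M (phi1 xi a) (phi2 xi b))). split; [|lra].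
      destruct (ns_norm_ge0 M (ns_sub M (phi1 xi a) (phi2 xi b))) as [H|H]; auto.
      exfalso. apply (Hne a b). apply sub_eq0. apply ns_norm_eq0. auto.
    - intros b eps He. destruct (cont_slice rho sigma2 HD HL2 M phi2 Hc2 xi b eps He) as [r [Hr H]].
      exists r. split; auto. intros c y Hq Hy. specialize (H y Hy).
      pose proof (norm_sub_tri M (phi1 xi a) (phi2 xi y) (phi2 xi b)).
      rewrite (norm_sub_sym M (phi2 xi y)) in H0. lra. }
  destruct (lb_compact sigma1 HL1 (fun a c => forall b, c <= ns_norm M (ns_sub M (phi1 xi a) (phi2 xi b))) K1)
    as [c [Hc Hcb]].
  - intros a c c' H Hl b. specialize (H b). lra.
  - exact S1.
  - intros a eps He. destruct (cont_slice rho sigma1 HD HL1 M phi1 Hc1 xi a eps He) as [r [Hr H]].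
    exists r. split; auto. intros c y Hq Hy b. specialize (H y Hy). specialize (Hq b).
    pose proof (norm_sub_tri M (phi1 xi a) (phi1 xi y) (phi2 xi b)). lra.
  - destruct (unif_cont rho sigma1 HD HL1 M phi1 Hc1 K1 xi (c/2)) as [d1 [Hd1 U1]]. lra.
    destruct (unif_cont rho sigma2 HD HL2 M phi2 Hc2 K2 xi (c/2)) as [d2 [Hd2 U2]]. lra.
    destruct (Happ (Rmin d1 d2)) as [y [[a [b E]] Hy]]. apply Rmin_glb_lt; auto.
    pose proof (Rmin_l d1 d2). pose proof (Rmin_r d1 d2).
    specialize (U1 y a ltac:(lra)). specialize (U2 y b ltac:(lra)).
    specialize (Hcb a b).
    pose proof (norm_sub_tri M (phi1 xi a) (phi1 y a) (phi2 xi b)) as T.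
    rewrite <- E, (norm_sub_sym M (phi2 xi b)) in U2. lra.
Qed.

From Stdlib Require Import ClassicalEpsilon.

Lemma choice_nat (P : nat -> R -> Prop) : (forall n, exists d, P n d) -> exists f, forall n, P n (f n).
Proof.
  intro H. exists (fun n => proj1_sig (constructive_indefinite_description _ (H n))).
  intro n. exact (proj2_sig (constructive_indefinite_description _ (H n))).
Qed.

Lemma diam_exists {X} (dist : X -> X -> R) (E : X -> Prop) (B : R) :
  (forall x y, 0 <= dist x y) -> 0 <= B -> (forall x y, E x -> E y -> dist x y <= B) ->
  exists d, is_diam dist E d /\ 0 <= d /\ d <= B.
Proof.
  intros H0 HB HE. destruct (classic (exists x, E x)) as [[x Hx]|Hn].
  - set (S := fun t => exists x y, E x /\ E y /\ t = dist x y).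
    assert (Hb : bound S). { exists B. intros t [u [v [Hu [Hv ->]]]]. auto. }
    destruct (completeness S Hb) as [d Hd]. { exists (dist x x). exists x, x. auto. }
    exists d. split. right. split; eauto. split.
    + apply Rle_trans with (dist x x); auto. apply Hd. exists x, x. auto.
    + apply Hd. intros t [u [v [Hu [Hv ->]]]]. auto.
  - exists 0. split. left. split; auto. intros x Hx. apply Hn; eauto. lra.
Qed.

Lemma diam_bound {X} (dist : X -> X -> R) (U : X -> Prop) dm x y :
  is_diam dist U dm -> U x -> U y -> dist x y <= dm.
Proof.
  intros [[Hn _]|[_ Hl]] Hx Hy. exfalso; apply (Hn x Hx).
  apply Hl. exists x, y. auto.
Qed.

Lemma diam_nonneg {X} (dist : X -> X -> R) (U : X -> Prop) dm :
  (forall x y, 0 <= dist x y) -> is_diam dist U dm -> 0 <= dm.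
Proof.
  intros H0 [[_ ->]|[[x Hx] Hl]]. lra.
  apply Rle_trans with (dist x x); auto. apply Hl. exists x, x. auto.
Qed.

Lemma hdim_compare {X Y} (dA : X -> X -> R) (dB : Y -> Y -> R) A B k va vb :
  0 < k -> (forall s, 0 < s -> hnull dA s A -> hnull dB (k * s) B) ->
  is_hdim dB B vb -> is_hdim dA A va -> ele vb (escale k va).
Proof.
  intros hk H Hb Ha. destruct va as [r|]; [|destruct vb; simpl; auto].
  destruct Ha as [[s [Hs Hn]] [Hlow Hglb]]. destruct vb as [r'|]; simpl.
  - destruct Hb as [_ [Hblow _]].
    assert (r' / k <= r).
    { apply Hglb. intros s' Hs' Hn'. assert (r' <= k * s').
      { apply Hblow. apply Rmult_lt_0_compat; auto. apply H; auto. }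
      apply (Rmult_le_reg_l k); auto. field_simplify; lra. }
    replace r' with (k * (r' / k)) by (field; lra).
    apply Rmult_le_compat_l; lra.
  - apply (Hb (k * s)). apply Rmult_lt_0_compat; auto. apply H; auto.
Qed.

Lemma ele_emin a b c : ele a b -> ele a c -> ele a (emin b c).
Proof.
  destruct a, b, c; simpl; auto. intros. apply Rmin_glb; auto.
Qed.

Lemma dim_part (D L1 L2 : Type) (rho : D -> D -> R) (sigma1 : L1 -> L1 -> R) (sigma2 : L2 -> L2 -> R)
  (HD : is_metric rho) (HL1 : is_metric sigma1) (HL2 : is_metric sigma2)
  (M : NormedSpace) (phi1 : D -> L1 -> M) (phi2 : D -> L2 -> M)
  (C0 alpha : R) (hC0 : 0 < C0) (halpha : 0 < alpha)
  (Ha1 : forall xi x y, ns_norm M (ns_sub M (phi1 xi x) (phi1 xi y)) <= C0 * rpow (sigma1 x y) alpha)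
  (Ha2 : forall xi x y, ns_norm M (ns_sub M (phi2 xi x) (phi2 xi y)) <= C0 * rpow (sigma2 x y) alpha)
  (M0 beta : R) (hM0 : 0 < M0) (hbeta : 0 < beta)
  (Hb : forall x1 x2 xi xi',
     ns_norm M (ns_sub M (ns_sub M (phi1 xi' x1) (phi2 xi' x2))
                         (ns_sub M (phi1 xi x1) (phi2 xi x2)))
     >= M0 * rpow (rho xi' xi) beta) :
  forall s, 0 < s -> hnull (prod_dist sigma1 sigma2) s full ->
    hnull rho ((beta / alpha) * s) (DeltaSet M phi1 phi2).
Proof.
  intros s Hs Hn del eps Hdel Heps.
  destruct HD as [Hr0 [Hr1 [Hrs Hrt]]]. destruct HL1 as [Ha0 [_ [Has _]]].
  destruct HL2 as [Hb0 [_ [Hbs _]]].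
  set (K := 2 * C0 / M0). assert (HK : 0 < K) by (unfold K; apply Rdiv_lt_0_compat; lra).
  set (del' := rpow (rpow del beta / K) (/ alpha)).
  set (KS := rpow K (s / alpha)). assert (HKS : 0 < KS) by (apply rpow_pos; auto).
  assert (Hdel' : 0 < del').
  { apply rpow_pos. apply Rdiv_lt_0_compat; auto. apply rpow_pos; auto. }
  destruct (Hn del' (eps / KS) Hdel' ltac:(apply Rdiv_lt_0_compat; auto))
    as [U [dm [HU [Hcov Hsum]]]].
  assert (Hpd0 : forall p q, 0 <= prod_dist sigma1 sigma2 p q).
  { intros. unfold prod_dist. apply sqrt_pos. }
  assert (Hdm0 : forall n, 0 <= dm n).
  { intro n. apply (diam_nonneg (prod_dist sigma1 sigma2) (U n)); auto. apply HU. }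
  set (V := fun n xi => exists a b, U n (a, b) /\ phi1 xi a = phi2 xi b).
  set (B := fun n => rpow (K * rpow (dm n) alpha) (/ beta)).
  assert (Key : forall n x y, V n x -> V n y -> rho x y <= B n).
  { intros n x y [a [b [Hu E]]] [a' [b' [Hu' E']]].
    assert (Hd : prod_dist sigma1 sigma2 (a, b) (a', b') <= dm n).
    { apply (diam_bound (prod_dist sigma1 sigma2) (U n)); auto. apply HU. }
    pose proof (Hb a' b' y x) as H. rewrite E', sub_self, sub_0r in H.
    pose proof (norm_sub_tri M (phi1 x a') (phi2 x b) (phi2 x b')) as T.
    pose proof (Ha1 x a' a) as A1. rewrite E in A1. pose proof (Ha2 x b b').
    assert (S1 : rpow (sigma1 a' a) alpha <= rpow (dm n) alpha).
    { apply rpow_mono; auto. split; auto. rewrite Has.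
      eapply Rle_trans; [|exact Hd]. apply (pd_ge1 sigma1 sigma2 (a, b) (a', b')). simpl; auto. }
    assert (S2 : rpow (sigma2 b b') alpha <= rpow (dm n) alpha).
    { apply rpow_mono; auto. split; auto.
      eapply Rle_trans; [|exact Hd]. apply (pd_ge2 sigma1 sigma2 (a, b) (a', b')). simpl; auto. }
    assert (Hm : M0 * rpow (rho x y) beta <= 2 * C0 * rpow (dm n) alpha) by nra.
    assert (Hm2 : rpow (rho x y) beta <= K * rpow (dm n) alpha).
    { apply (Rmult_le_reg_l M0); auto.
      replace (M0 * (K * rpow (dm n) alpha)) with (2 * C0 * rpow (dm n) alpha) by (unfold K; field; lra).
      lra. }
    apply (rpow_inv_le _ _ beta); auto. apply rpow_ge0. unfold B.
    rewrite rpow_rpow. replace (/ beta * beta) with 1 by (field; lra).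
    rewrite rpow_1; auto. apply Rmult_le_pos; [lra|apply rpow_ge0].
    apply Rmult_le_pos; [lra|apply rpow_ge0]. }
  destruct (choice_nat (fun n d => is_diam rho (V n) d /\ 0 <= d /\ d <= B n)) as [e He].
  { intro n. apply diam_exists; auto. apply rpow_ge0. }
  assert (HBdel : forall n, B n <= del).
  { intro n. unfold B.
    assert (E1 : rpow del' alpha = rpow del beta / K).
    { unfold del'. rewrite rpow_rpow. replace (/ alpha * alpha) with 1 by (field; lra).
      apply rpow_1. apply Rmult_le_pos; [apply rpow_ge0|left; apply Rinv_0_lt_compat; auto].
      apply Rmult_le_pos; [apply rpow_ge0|left; apply Rinv_0_lt_compat; auto]. }
    apply Rle_trans with (rpow (K * rpow del' alpha) (/ beta)).
    - apply rpow_mono. split. apply Rmult_le_pos; [lra|apply rpow_ge0].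
      apply Rmult_le_compat_l; [lra|]. apply rpow_mono. split; auto. apply HU.
      auto. apply Rinv_0_lt_compat; auto.
    - rewrite E1. replace (K * (rpow del beta / K)) with (rpow del beta) by (field; lra).
      rewrite rpow_rpow by lra. replace (beta * / beta) with 1 by (field; lra).
      rewrite rpow_1 by lra. lra. }
  exists V, e. split; [|split].
  - intro n. destruct (He n) as [H1 [H2 H3]]. split; auto.
    eapply Rle_trans; eauto.
  - intros x [a [b E]]. destruct (Hcov (a, b) I) as [n Hu]. exists n, a, b. auto.
  - intro N. apply Rle_trans with (sum_f_R0 (fun n => rpow (dm n) s * KS) N).
    + apply sum_Rle. intros n _. destruct (He n) as [_ [H2 H3]].
      apply Rle_trans with (rpow (B n) (beta / alpha * s)).
      { apply rpow_mono; auto. apply Rmult_lt_0_compat; auto. apply Rdiv_lt_0_compat; auto. }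
      unfold B. rewrite rpow_rpow by (apply Rmult_le_pos; [lra|apply rpow_ge0]).
      replace (/ beta * (beta / alpha * s)) with (s / alpha) by (field; lra).
      rewrite rpow_mult by (try lra; apply rpow_ge0).
      rewrite rpow_rpow by auto. replace (alpha * (s / alpha)) with s by (field; lra).
      unfold KS. lra.
    + rewrite <- scal_sum. specialize (Hsum N).
      apply Rle_trans with (KS * (eps / KS)).
      apply Rmult_le_compat_l; lra. right. field. lra.
Qed.

Theorem theorem1
  (D L1 L2 : Type) (rho : D -> D -> R) (sigma1 : L1 -> L1 -> R) (sigma2 : L2 -> L2 -> R)
  (HD : is_metric rho) (HL1 : is_metric sigma1) (HL2 : is_metric sigma2)
  (M : NormedSpace) (phi1 : D -> L1 -> M) (phi2 : D -> L2 -> M)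
  (C0 alpha : R) (hC0 : 0 < C0) (halpha : 0 < alpha)
  (Ha1 : forall xi x y, ns_norm M (ns_sub M (phi1 xi x) (phi1 xi y)) <= C0 * rpow (sigma1 x y) alpha)
  (Ha2 : forall xi x y, ns_norm M (ns_sub M (phi2 xi x) (phi2 xi y)) <= C0 * rpow (sigma2 x y) alpha)
  (M0 beta : R) (hM0 : 0 < M0) (hbeta : 0 < beta)
  (Hb : forall x1 x2 xi xi',
     ns_norm M (ns_sub M (ns_sub M (phi1 xi' x1) (phi2 xi' x2))
                         (ns_sub M (phi1 xi x1) (phi2 xi x2)))
     >= M0 * rpow (rho xi' xi) beta) :
  (forall dDelta dL dD,
     is_hdim rho (DeltaSet M phi1 phi2) dDelta ->
     is_hdim (prod_dist sigma1 sigma2) full dL ->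
     is_hdim rho full dD ->
     ele dDelta (emin (escale (beta / alpha) dL) dD)) /\
  (continuous_into (prod_dist rho sigma1) M (fun p => phi1 (fst p) (snd p)) ->
   continuous_into (prod_dist rho sigma2) M (fun p => phi2 (fst p) (snd p)) ->
   compact_space sigma1 -> compact_space sigma2 ->
   closed_in rho (DeltaSet M phi1 phi2)).
Proof.
  split.
  - intros dDelta dL dD H1 H2 H3. apply ele_emin.
    + apply (hdim_compare (prod_dist sigma1 sigma2) rho full (DeltaSet M phi1 phi2)); auto.
      apply Rdiv_lt_0_compat; auto.
      intros s Hs Hn. apply (dim_part D L1 L2 rho sigma1 sigma2 HD HL1 HL2 M phi1 phi2 C0 alpha hC0 halpha Ha1 Ha2 M0 beta hM0 hbeta Hb s Hs Hn).
    + assert (E : ele dDelta (escale 1 dD)).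
      { apply (hdim_compare rho rho full (DeltaSet M phi1 phi2)); [lra| |exact H1|exact H3].
        intros s Hs Hn del eps Hd He. rewrite Rmult_1_l.
        destruct (Hn del eps Hd He) as [U [dm [A [B C]]]]. exists U, dm.
        split; [exact A|split; [|exact C]]. intros x _. apply B. exact I. }
      destruct dD; simpl in E; auto. rewrite Rmult_1_l in E. exact E.
  - apply closed_part; auto.
Qed.
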